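(* Let $n=5$, $x_i=i$ for $i=1,\dots,5$, and $Y_i=\beta_0+\beta_1x_i+\varepsilon_i$ with unknown $\beta_0,\beta_1\in\mathbb{R}$ and $\varepsilon_1,\dots,\varepsilon_5$ i.i.d. with a continuous distribution. Let $s_1<s_2<\cdots<s_{10}$ be the ten slopes $S_{ij}=(Y_i-Y_j)/(x_i-x_j)$, $i<j$, sorted increasingly. Then $$p_4:=P\bigl(\beta_1\in(s_1,s_{10})\wedge s_1+s_9<2s_2\wedge 2s_9<s_2+s_{10}\bigr)=0.$$
   Context: Ties among the slopes occur with probability zero and are ignored. *)

(* Defs.v *)
From HB Require Import structures.
From mathcomp Require Import all_boot all_order all_algebra.
From mathcomp Require Import all_classical all_reals all_analysis.
Set Implicit Arguments. Unset Strict Implicit. Unset Printing Implicit Defensive.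
Import Order.TTheory GRing.Theory Num.Theory.
Local Open Scope classical_set_scope.
Local Open Scope ring_scope.

(* Mutual independence of a finite family of real random variables:
   product rule for the joint preimage of measurable sets (taking B i = setT
   recovers every subfamily). *)
Definition mutually_independent {d} {T : measurableType d} {R : realType}
  (P : probability T R) (n : nat) (X : 'I_n -> {RV P >-> R}) : Prop :=
  forall B : 'I_n -> set R, (forall i, measurable (B i)) ->
    P (\bigcap_(i in [set: 'I_n]) (X i @^-1` B i)) =
    (\prod_(i < n) P (X i @^-1` B i))%E.

Definition identically_distributed {d} {T : measurableType d} {R : realType}
  (P : probability T R) (n : nat) (X : 'I_n.+1 -> {RV P >-> R}) : Prop :=
  forall i (B : set R), measurable B -> P (X i @^-1` B) = P (X ord0 @^-1` B).

(* continuous distribution (continuous cdf, i.e. no atoms) *)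
Definition continuous_law {d} {T : measurableType d} {R : realType}
  (P : probability T R) (Z : {RV P >-> R}) : Prop :=
  forall x : R, P (Z @^-1` [set x]) = 0%E.

(* design points x_i = i, i = 1..5 (ordinal i : 'I_5 stands for index i+1) *)
Definition xpt {R : realType} (i : 'I_5) : R := (i.+1)%:R.

Definition slopes {R : realType} (Y : 'I_5 -> R) : seq R :=
  flatten [seq [seq (Y i - Y j) / (xpt i - xpt j) | j : 'I_5 <- enum 'I_5 & (i < j)%N]
          | i : 'I_5 <- enum 'I_5].

Definition sorted_slope {R : realType} (Y : 'I_5 -> R) (k : nat) : R :=
  nth 0 (sort <=%R (slopes Y)) k.-1.

Arguments mutually_independent {d T R} P {n} X.
Arguments identically_distributed {d T R} P {n} X.
Arguments continuous_law {d T R} P Z.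

(* Main.v *)
Require Import Defs.
From HB Require Import structures.
From mathcomp Require Import all_boot all_order all_algebra.
From mathcomp Require Import all_classical all_reals all_analysis.
From mathcomp Require Import ring lra zify.
Import Order.TTheory GRing.Theory Num.Theory.
Local Open Scope classical_set_scope.
Local Open Scope ring_scope.

Lemma e5 : enum 'I_5 = [:: inord 0; inord 1; inord 2; inord 3; inord 4].
Proof.
apply: (inj_map val_inj). rewrite val_enum_ord /= !inordK //.
Qed.

Section S.
Variable R : realType.

Definition Lst (d0 d1 d2 d3 : R) : seq R :=
  [:: d0; (d0 + d1) / 2; (d0 + d1 + d2) / 3; (d0 + d1 + d2 + d3) / 4;
      d1; (d1 + d2) / 2; (d1 + d2 + d3) / 3; d2; (d2 + d3) / 2; d3].

Lemma slopesE (y : 'I_5 -> R) :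
  slopes y = Lst (y (inord 1) - y (inord 0)) (y (inord 2) - y (inord 1))
                 (y (inord 3) - y (inord 2)) (y (inord 4) - y (inord 3)).
Proof.
have xE k : (k < 5)%N -> xpt (inord k : 'I_5) = (k.+1)%:R :> R by move=> hk; rewrite /xpt inordK.
rewrite /slopes e5 /= !inordK //= !xE //= /Lst.
by congr [:: _; _; _; _; _; _; _; _; _; _]; field.
Qed.

Lemma count2 (s : seq R) (a : pred R) i j :
  (i < j)%N -> (j < size s)%N -> a (nth 0 s i) -> a (nth 0 s j) -> (1 < count a s)%N.
Proof.
move=> ij js ai aj.
rewrite -(cat_take_drop j s) count_cat (drop_nth 0 js) /= aj.
have : (0 < count a (take j s))%N.
  rewrite -has_count; apply/hasP; exists (nth 0 s i) => //.
  rewrite -(nth_take 0 ij); apply: mem_nth; rewrite size_takel //; exact: ltnW.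
lia.
Qed.

Lemma sort10 (s : seq R) : size s = 10%N ->
 let t := sort <=%R s in
 (forall m : R, (1 < count (fun z => (z <= m)%R) s)%N -> t`_1 <= m) /\
 (forall m : R, (1 < count (fun z => (m <= z)%R) s)%N -> m <= t`_8) /\
 (forall m : R, all (fun z => m <= z) s -> m <= t`_0) /\
 (forall m : R, all (fun z => z <= m) s -> t`_9 <= m).
Proof.
move=> hs t.
have st : sorted <=%R t by apply: sort_sorted; exact: le_total.
have pe : perm_eq t s by rewrite perm_sort.
have sz : size t = 10%N by rewrite size_sort.
move: t st pe sz => t st pe sz.
split; last split; last split.
- move=> m; rewrite -((permP pe) _).
  case: t st sz {pe} => [|x0 [|x1 [|x2 [|x3 [|x4 [|x5 [|x6 [|x7 [|x8 [|x9 [|]]]]]]]]]]] //=.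
  move=> /andP[h0 /andP[h1 /andP[h2 /andP[h3 /andP[h4 /andP[h5 /andP[h6 /andP[h7 /andP[h8 _]]]]]]]]] _ hc.
  rewrite leNgt; apply/negP=> hm.
  have f : forall z, x1 <= z -> (z <= m) = false.
    by move=> z hz; apply/negbTE; rewrite -ltNge; apply: lt_le_trans hm hz.
  move: hc; rewrite (f x1) // (f x2) // (f x3); last lra.
  rewrite (f x4); last lra. rewrite (f x5); last lra. rewrite (f x6); last lra.
  rewrite (f x7); last lra. rewrite (f x8); last lra. rewrite (f x9); last lra.
  by case: (x0 <= m).
- move=> m; rewrite -((permP pe) _).
  case: t st sz {pe} => [|x0 [|x1 [|x2 [|x3 [|x4 [|x5 [|x6 [|x7 [|x8 [|x9 [|]]]]]]]]]]] //=.
  move=> /andP[h0 /andP[h1 /andP[h2 /andP[h3 /andP[h4 /andP[h5 /andP[h6 /andP[h7 /andP[h8 _]]]]]]]]] _ hc.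
  rewrite leNgt; apply/negP=> hm.
  have f : forall z, z <= x8 -> (m <= z) = false.
    by move=> z hz; apply/negbTE; rewrite -ltNge; apply: le_lt_trans hz hm.
  move: hc; rewrite (f x8) // (f x7) // (f x6); last lra.
  rewrite (f x5); last lra. rewrite (f x4); last lra. rewrite (f x3); last lra.
  rewrite (f x2); last lra. rewrite (f x1); last lra. rewrite (f x0); last lra.
  by case: (m <= x9).
- move=> m; rewrite -(perm_all _ pe) => /allP; apply.
  case: t sz {st pe} => [|x0 [|x1 [|x2 [|x3 [|x4 [|x5 [|x6 [|x7 [|x8 [|x9 [|]]]]]]]]]]] //= _.
  by rewrite inE eqxx.
- move=> m; rewrite -(perm_all _ pe) => /allP; apply.
  case: t sz {st pe} => [|x0 [|x1 [|x2 [|x3 [|x4 [|x5 [|x6 [|x7 [|x8 [|x9 [|]]]]]]]]]]] //= _.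
  by rewrite !inE eqxx !orbT.
Qed.


Lemma min4 (a0 a1 a2 a3 : R) :
  [\/ a0 <= a1 /\ a0 <= a2 /\ a0 <= a3, a1 <= a0 /\ a1 <= a2 /\ a1 <= a3,
      a2 <= a0 /\ a2 <= a1 /\ a2 <= a3 | a3 <= a0 /\ a3 <= a1 /\ a3 <= a2].
Proof.
case: (leP a0 a1) => h01.
  case: (leP a0 a2) => h02.
    by case: (leP a0 a3) => h03; [apply: Or41 | apply: Or44]; lra.
  by case: (leP a2 a3) => h23; [apply: Or43 | apply: Or44]; lra.
case: (leP a1 a2) => h12.
  by case: (leP a1 a3) => h13; [apply: Or42 | apply: Or44]; lra.
by case: (leP a2 a3) => h23; [apply: Or43 | apply: Or44]; lra.
Qed.

Lemma max4 (a0 a1 a2 a3 : R) :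
  [\/ a1 <= a0 /\ a2 <= a0 /\ a3 <= a0, a0 <= a1 /\ a2 <= a1 /\ a3 <= a1,
      a0 <= a2 /\ a1 <= a2 /\ a3 <= a2 | a0 <= a3 /\ a1 <= a3 /\ a2 <= a3].
Proof.
case: (leP a1 a0) => h01.
  case: (leP a2 a0) => h02.
    by case: (leP a3 a0) => h03; [apply: Or41 | apply: Or44]; lra.
  by case: (leP a3 a2) => h23; [apply: Or43 | apply: Or44]; lra.
case: (leP a2 a1) => h12.
  by case: (leP a3 a1) => h13; [apply: Or42 | apply: Or44]; lra.
by case: (leP a3 a2) => h23; [apply: Or43 | apply: Or44]; lra.
Qed.

Ltac c2 u v := apply: (@count2 _ _ u v) => //; rewrite /Lst /=; lra.
Ltac allt := rewrite /Lst /= ?andbT; repeat (apply/andP; split); lra.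

Lemma core (d0 d1 d2 d3 t1 t2 t9 t10 : R) :
  (forall m : R, (1 < count (fun z => (z <= m)%R) (Lst d0 d1 d2 d3))%N -> t2 <= m) ->
  (forall m : R, (1 < count (fun z => (m <= z)%R) (Lst d0 d1 d2 d3))%N -> m <= t9) ->
  (forall m : R, all (fun z => m <= z) (Lst d0 d1 d2 d3) -> m <= t1) ->
  (forall m : R, all (fun z => z <= m) (Lst d0 d1 d2 d3) -> t10 <= m) ->
  ~ (t1 + t9 < 2 * t2 /\ 2 * t9 < t2 + t10).
Proof.
move=> F2 F9 F1 F10 [H1 H2].
have [[m1 [m2 m3]]|[m1 [m2 m3]]|[m1 [m2 m3]]|[m1 [m2 m3]]] := min4 d0 d1 d2 d3;
have [[M1 [M2 M3]]|[M1 [M2 M3]]|[M1 [M2 M3]]|[M1 [M2 M3]]] := max4 d0 d1 d2 d3.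
-
  have a2 : t2 <= ((d0 + d1) / 2) by apply: F2; (c2 0%N 1%N).
  have a9 : d1 <= t9 by apply: F9; (c2 0%N 4%N).
  have a1 : d0 <= t1 by apply: F1; allt.
  lra.
-
  have a9 : ((d1 + d2) / 2) <= t9 by apply: F9; (c2 4%N 5%N).
  have a2 : t2 <= d2 by apply: F2; (c2 0%N 7%N).
  have a1 : t10 <= d1 by apply: F10; allt.
  lra.
-
  have a2 : t2 <= ((d0 + d1) / 2) by apply: F2; (c2 0%N 1%N).
  have a9 : d1 <= t9 by apply: F9; (c2 4%N 7%N).
  have a1 : d0 <= t1 by apply: F1; allt.
  lra.
-
  have a2 : t2 <= ((d0 + d1) / 2) by apply: F2; (c2 0%N 1%N).
  have a9 : d1 <= t9 by apply: F9; (c2 4%N 9%N).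
  have a1 : d0 <= t1 by apply: F1; allt.
  lra.
-
  have a2 : t2 <= ((d1 + d2) / 2) by apply: F2; (c2 4%N 5%N).
  have a9 : d2 <= t9 by apply: F9; (c2 0%N 7%N).
  have a1 : d1 <= t1 by apply: F1; allt.
  lra.
-
  have a2 : t2 <= ((d0 + d1) / 2) by apply: F2; (c2 1%N 4%N).
  have a9 : d0 <= t9 by apply: F9; (c2 0%N 4%N).
  have a1 : d1 <= t1 by apply: F1; allt.
  lra.
-
  have a2 : t2 <= ((d0 + d1) / 2) by apply: F2; (c2 1%N 4%N).
  have a9 : d0 <= t9 by apply: F9; (c2 0%N 7%N).
  have a1 : d1 <= t1 by apply: F1; allt.
  lra.
-
  have a2 : t2 <= ((d0 + d1) / 2) by apply: F2; (c2 1%N 4%N).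
  have a9 : d0 <= t9 by apply: F9; (c2 0%N 9%N).
  have a1 : d1 <= t1 by apply: F1; allt.
  lra.
-
  have a2 : t2 <= ((d1 + d2) / 2) by apply: F2; (c2 5%N 7%N).
  have a9 : d1 <= t9 by apply: F9; (c2 0%N 4%N).
  have a1 : d2 <= t1 by apply: F1; allt.
  lra.
-
  have a2 : t2 <= ((d2 + d3) / 2) by apply: F2; (c2 7%N 8%N).
  have a9 : d3 <= t9 by apply: F9; (c2 4%N 9%N).
  have a1 : d2 <= t1 by apply: F1; allt.
  lra.
-
  have a2 : t2 <= ((d1 + d2) / 2) by apply: F2; (c2 5%N 7%N).
  have a9 : d1 <= t9 by apply: F9; (c2 4%N 7%N).
  have a1 : d2 <= t1 by apply: F1; allt.
  lra.
-
  have a2 : t2 <= ((d1 + d2) / 2) by apply: F2; (c2 5%N 7%N).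
  have a9 : d1 <= t9 by apply: F9; (c2 4%N 9%N).
  have a1 : d2 <= t1 by apply: F1; allt.
  lra.
-
  have a2 : t2 <= ((d2 + d3) / 2) by apply: F2; (c2 8%N 9%N).
  have a9 : d2 <= t9 by apply: F9; (c2 0%N 7%N).
  have a1 : d3 <= t1 by apply: F1; allt.
  lra.
-
  have a2 : t2 <= ((d2 + d3) / 2) by apply: F2; (c2 8%N 9%N).
  have a9 : d2 <= t9 by apply: F9; (c2 4%N 7%N).
  have a1 : d3 <= t1 by apply: F1; allt.
  lra.
-
  have a9 : ((d1 + d2) / 2) <= t9 by apply: F9; (c2 5%N 7%N).
  have a2 : t2 <= d1 by apply: F2; (c2 4%N 9%N).
  have a1 : t10 <= d2 by apply: F10; allt.
  lra.
-
  have a2 : t2 <= ((d2 + d3) / 2) by apply: F2; (c2 8%N 9%N).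
  have a9 : d2 <= t9 by apply: F9; (c2 7%N 9%N).
  have a1 : d3 <= t1 by apply: F1; allt.
  lra.
Qed.

End S.

Theorem theorem6 (R : realType) (d : measure_display) (T : measurableType d)
  (P : probability T R) (eps : 'I_5 -> {RV P >-> R}) (beta0 beta1 : R) :
  mutually_independent P eps ->
  identically_distributed P eps ->
  continuous_law P (eps ord0) ->
  let Y := fun (w : T) (i : 'I_5) => beta0 + beta1 * xpt i + eps i w in
  let s := fun (w : T) (k : nat) => sorted_slope (Y w) k in
  P [set w | [/\ s w 1%N < beta1 < s w 10%N,
                 s w 1%N + s w 9%N < 2 * s w 2%N &
                 2 * s w 9%N < s w 2%N + s w 10%N]] = 0%E.
Proof.
move=> _ _ _ Y s.
suff -> : [set w | [/\ s w 1%N < beta1 < s w 10%N,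
                 s w 1%N + s w 9%N < 2 * s w 2%N &
                 2 * s w 9%N < s w 2%N + s w 10%N]] = set0 by rewrite measure0.
apply/seteqP; split => w //= [_ h1 h2].
move: h1 h2; rewrite /s /sorted_slope /= slopesE.
set L := Lst _ _ _ _ _.
have [F2 [F9 [F1 F10]]] := @sort10 R L erefl.
move=> h1 h2; by case: (@core R _ _ _ _ _ _ _ _ F2 F9 F1 F10 (conj h1 h2)).
Qed.
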